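(* Let $\mathcal{G}$ be a hypergraph with at least one edge. Then $$\gamma(\mathcal{G})\ge 1-\frac{\lambda_{\max}(A_{\mathcal{G}})}{\lambda_{\min}(A_{\mathcal{G}})},$$ where $\lambda_{\max}(A_{\mathcal{G}})$ and $\lambda_{\min}(A_{\mathcal{G}})$ are the largest and smallest eigenvalues of $A_{\mathcal{G}}$.
   Context: A hypergraph $\mathcal{G}=(V,E)$ has a finite vertex set $V$ and a set $E$ of subsets of $V$ (edges), each of cardinality at least $2$. Two distinct vertices are adjacent if some edge contains both. The adjacency matrix $A_{\mathcal{G}}$ has $(A_{\mathcal{G}})_{ij}=\sum_{e\in E,\, i,j\in e}\frac{1}{|e|-1}$ for $i\ne j$ and zero diagonal. The strong chromatic number $\gamma(\mathcal{G})$ is the minimum number of colors in a coloring of the vertices in which any two adjacent vertices get different colors. *)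

(* Defs.v *)
From HB Require Import structures.
From mathcomp Require Import all_boot all_order all_algebra.
Set Implicit Arguments. Unset Strict Implicit. Unset Printing Implicit Defensive.
Import Order.TTheory GRing.Theory Num.Theory.
Local Open Scope ring_scope.

Definition is_hypergraph (n : nat) (E : {set {set 'I_n}}) : Prop :=
  forall e, e \in E -> (2 <= #|e|)%N.

Definition hadj (n : nat) (E : {set {set 'I_n}}) (i j : 'I_n) : bool :=
  (i != j) && [exists e in E, (i \in e) && (j \in e)].

Definition hadj_matrix (R : fieldType) (n : nat) (E : {set {set 'I_n}}) : 'M[R]_n :=
  \matrix_(i, j) (if i == j then 0
                  else \sum_(e in E | (i \in e) && (j \in e)) ((#|e| - 1)%:R)^-1).

Definition strong_colorable (n : nat) (E : {set {set 'I_n}}) (k : nat) : bool :=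
  [exists c : {ffun 'I_n -> 'I_k},
     [forall i, forall j, hadj E i j ==> (c i != c j)]].

Lemma strong_colorable_n (n : nat) (E : {set {set 'I_n}}) :
  exists k, strong_colorable E k.
Proof.
exists n; apply/existsP; exists [ffun i => i]; apply/forallP => i; apply/forallP => j.
by apply/implyP => /andP[hij _]; rewrite !ffunE.
Qed.

Definition strong_chromatic (n : nat) (E : {set {set 'I_n}}) : nat :=
  ex_minn (strong_colorable_n E).

(* Main.v *)
Require Import Defs.
From HB Require Import structures.
From mathcomp Require Import all_boot all_order all_algebra.
From mathcomp Require Import ring lra.
From mathcomp Require Import complex.
Import Order.TTheory GRing.Theory Num.Theory.
Local Open Scope ring_scope.

Lemma sum_delta (R : comNzRingType) (T : finType) (a : T) (F : T -> R) :
  \sum_b (a == b)%:R * F b = F a.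
Proof.
rewrite (bigD1 a) //= eqxx mul1r big1 ?addr0 // => b.
by rewrite eq_sym => /negPf ->; rewrite mul0r.
Qed.

Lemma sum_delta1 (R : comNzRingType) (T : finType) (a : T) :
  \sum_b (a == b)%:R = 1 :> R.
Proof. by rewrite -[RHS](@sum_delta _ _ a (fun _ => 1 : R)); apply: eq_bigr => b _; rewrite mulr1. Qed.

Lemma swap4 (R : nmodType) (I J : finType) (F : I -> I -> J -> J -> R) :
  \sum_j \sum_l \sum_a \sum_b F j l a b = \sum_a \sum_b \sum_j \sum_l F j l a b.
Proof.
transitivity (\sum_j \sum_a \sum_l \sum_b F j l a b).
  by apply: eq_bigr => j _; exact: exchange_big.
transitivity (\sum_j \sum_a \sum_b \sum_l F j l a b).
  by apply: eq_bigr => j _; apply: eq_bigr => a _; exact: exchange_big.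
rewrite exchange_big /=; apply: eq_bigr => a _; exact: exchange_big.
Qed.

Lemma Tformula (R : comNzRingType) k (al be : 'I_k) :
  \sum_j \sum_l (((al == j)%:R - (al == l)%:R) * ((be == j)%:R - (be == l)%:R))
  = (al == be)%:R *+ (2 * k) - 2 :> R.
Proof.
have S2 (u v : 'I_k) : \sum_l (u == l)%:R * (v == l)%:R = (u == v)%:R :> R.
  by rewrite sum_delta eq_sym.
transitivity (\sum_j ((al == j)%:R * (be == j)%:R *+ k - (al == j)%:R - (be == j)%:R
                + (al == be)%:R : R)).
  apply: eq_bigr => j _.
  transitivity (\sum_l ((al == j)%:R * (be == j)%:R - (al == j)%:R * (be == l)%:R
                  - (be == j)%:R * (al == l)%:R + (al == l)%:R * (be == l)%:R : R)).
    by apply: eq_bigr => l _; ring.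
  by rewrite !big_split /= !sumrN sumr_const card_ord -!mulr_sumr !sum_delta1 S2 !mulr1.
rewrite !big_split /= !sumrN sumr_const card_ord.
rewrite sumrMnl S2 !sum_delta1.
rewrite mulrnA; ring.
Qed.

Section PSD.
Local Open Scope sesquilinear_scope.
Lemma psd (R : rcfType) n (A : 'M[R]_n) (m : R) :
  A^T = A -> (forall a, eigenvalue A a -> m <= a) ->
  forall v : 'rV[R]_n, m * (v *m v^T) 0 0 <= (v *m A *m v^T) 0 0.
Proof.
move=> symA hb v.
pose rc := real_complex R.
have rcr (x : R) : (rc x)^* = rc x by rewrite conj_Creal // complex_real.
pose Ac := map_mx rc A.
have AcT : Ac ^t* = Ac.
  by apply/matrixP => i j; rewrite !mxE rcr -[in RHS]symA mxE.
have herm : Ac \is hermsymmx by apply/is_hermitianmxP; rewrite expr0 scale1r AcT.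
set P := spectralmx Ac; set d := spectral_diag Ac.
have Pu : P \is unitarymx := spectral_unitarymx Ac.
have PU : P \in unitmx := spectral_unit Ac.
have eAc : Ac = invmx P *m diag_mx d *m P.
  by have /orthomx_spectralP := hermitian_normalmx herm.
have iP : invmx P = P ^t* by exact: invmx_unitary.
have dreal := hermitian_spectral_diag_real herm.
have dge i : rc m <= d 0 i.
  have dr : d 0 i = rc (complex.Re (d 0 i)) by rewrite /rc RRe_real //; exact: (mxOverP dreal).
  rewrite dr lecR; apply: hb.
  rewrite eigenvalue_root_char -(fmorph_root rc) map_char_poly -eigenvalue_root_char.
  rewrite -[X in eigenvalue _ X]/(rc _) -dr.
  apply/eigenvalueP; exists (row i P).
    rewrite -row_mul.
    have -> : P *m Ac = diag_mx d *m P.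
      by rewrite [in LHS]eAc !mulmxA mulmxV // mul1mx.
    by apply/rowP => j; rewrite mul_diag_mx !mxE.
  apply/eqP => h.
  have : row i (P *m P ^t*) = 0 by rewrite row_mul h mul0mx.
  rewrite (unitarymxP Pu) => /rowP /(_ i); rewrite !mxE eqxx /= => /eqP.
  by rewrite oner_eq0.
pose vc := map_mx rc v.
have vcT : vc ^t* = map_mx rc v^T.
  by apply/matrixP => i j; rewrite !mxE rcr.
have k1 : (vc *m Ac *m vc ^t*) 0 0 = real_complex R ((v *m A *m v^T) 0 0).
  by rewrite vcT -!map_mxM mxE.
have k2 : (vc *m vc ^t*) 0 0 = real_complex R ((v *m v^T) 0 0).
  by rewrite vcT -!map_mxM mxE.
pose w := vc *m P ^t*.
have wT : w ^t* = P *m vc ^t*.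
  by rewrite /w trmx_mul map_mxM trmxCK.
have e1 : vc *m Ac *m vc ^t* = w *m diag_mx d *m w ^t*.
  by rewrite wT eAc iP /w !mulmxA.
have e2 : vc *m vc ^t* = w *m w ^t*.
  by rewrite wT /w -iP !mulmxA -[vc *m _ *m P]mulmxA mulVmx // mulmx1.
suff : rc m * (vc *m vc ^t*) 0 0 <= (vc *m Ac *m vc ^t*) 0 0.
  by rewrite k1 k2 -rmorphM lecR.
rewrite e1 e2 !mxE mulr_sumr.
apply: ler_sum => i _; rewrite mul_mx_diag !mxE.
rewrite mulrAC mulrC; apply: ler_wpM2l => //.
exact: mul_conjC_ge0.
Qed.
End PSD.

Theorem theorem4 (R : rcfType) (n : nat) (E : {set {set 'I_n}})
  (hE : is_hypergraph E) (hne : E != set0)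
  (lmax lmin : R)
  (hmax : eigenvalue (hadj_matrix R E) lmax)
  (hmin : eigenvalue (hadj_matrix R E) lmin)
  (hbounds : forall a : R, eigenvalue (hadj_matrix R E) a -> lmin <= a <= lmax) :
  1 - lmax / lmin <= (strong_chromatic E)%:R.
Proof.
set A := hadj_matrix R E.
have symA : A^T = A.
  apply/matrixP => i j; rewrite !mxE eq_sym; case: eqP => // _.
  by apply: eq_bigl => e; rewrite [(i \in e) && _]andbC.
have diag0 i : A i i = 0 by rewrite mxE eqxx.
have hpsd := @psd R n A lmin symA (fun a ha => (andP (hbounds a ha)).1).
have qform (u : 'rV[R]_n) :
    (u *m A *m u^T) 0 0 = \sum_a \sum_b u 0 a * u 0 b * A a b.
  rewrite mxE; under eq_bigr do rewrite !mxE mulr_suml.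
  rewrite exchange_big /=; apply: eq_bigr => a _; apply: eq_bigr => b _.
  by rewrite !mxE; ring.
have nform (u : 'rV[R]_n) : (u *m u^T) 0 0 = \sum_a u 0 a * u 0 a.
  by rewrite mxE; apply: eq_bigr => a _; rewrite mxE.
have qB (f : 'I_n -> R) :
    \sum_a \sum_b f a * f b * (A a b - lmin * (a == b)%:R)
    = \sum_a \sum_b f a * f b * A a b - lmin * \sum_a f a * f a.
  rewrite mulr_sumr -sumrB; apply: eq_bigr => a _.
  transitivity (\sum_b (f a * f b * A a b - (a == b)%:R * (lmin * (f a * f b)))).
    by apply: eq_bigr => b _; ring.
  by rewrite sumrB sum_delta.
have qpsd (f : 'I_n -> R) :
    0 <= \sum_a \sum_b f a * f b * (A a b - lmin * (a == b)%:R).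
  pose u : 'rV[R]_n := \row_a f a.
  have e1 : \sum_a u 0 a * u 0 a = \sum_a f a * f a.
    by apply: eq_bigr => a _; rewrite !mxE.
  have e2 : \sum_a \sum_b u 0 a * u 0 b * A a b = \sum_a \sum_b f a * f b * A a b.
    by apply: eq_bigr => a _; apply: eq_bigr => b _; rewrite !mxE.
  by rewrite qB subr_ge0 -e1 -e2 -qform -nform; exact: hpsd.
have lmin_lt0 : lmin < 0.
  rewrite ltNge; apply/negP => l0.
  case/set0Pn: hne => e0 e0E.
  have /card_gt1P [i [j [ie je ij]]] := hE e0 e0E.
  have Apos : 0 < A i j.
    rewrite mxE (negbTE ij) (bigD1 e0) /=; last by rewrite e0E ie je.
    have t1 : 0 < ((#|e0| - 1)%:R : R)^-1.
      by rewrite invr_gt0 ltr0n subn_gt0; apply: hE.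
    apply: (lt_le_trans t1); rewrite lerDl.
    by apply: sumr_ge0 => e _; rewrite invr_ge0 ler0n.
  have Aji : A j i = A i j by rewrite -[in LHS]symA mxE.
  have hd (F : 'I_n -> R) : \sum_a ((i == a)%:R - (j == a)%:R) * F a = F i - F j.
    transitivity (\sum_a ((i == a)%:R * F a - (j == a)%:R * F a)).
      by apply: eq_bigr => a _; ring.
    by rewrite sumrB !sum_delta.
  pose f a : R := (i == a)%:R - (j == a)%:R.
  have := qpsd f.
  have -> : \sum_a \sum_b f a * f b * (A a b - lmin * (a == b)%:R)
      = \sum_a f a * \sum_b f b * (A a b - lmin * (a == b)%:R).
    apply: eq_bigr => a _; rewrite mulr_sumr; apply: eq_bigr => b _; ring.
  rewrite hd !hd !diag0 !eqxx (negbTE ij) (eq_sym j i) (negbTE ij) Aji /= !mulr1 !mulr0.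
  lra.
rewrite /strong_chromatic; case: ex_minnP => k colk _.
case/existsP: colk => c /forallP hc.
have Bcol a b : (c a == c b)%:R * (A a b - lmin * (a == b)%:R) = - lmin * (a == b)%:R.
  case: (eqVneq a b) => [->|ne]; first by rewrite !eqxx diag0 /=; ring.
  case: (eqVneq (c a) (c b)) => ce; last by rewrite mul0r mulr0.
  have -> : A a b = 0.
    rewrite mxE (negbTE ne) big1 // => e /andP[eE /andP[ae be]]; exfalso.
    have := forallP (hc a) b; rewrite /hadj ne /=.
    have -> : [exists e0 in E, (a \in e0) && (b \in e0)].
      by apply/existsP; exists e; rewrite eE ae be.
    by rewrite /= ce eqxx.
  by rewrite mulr0 /=; ring.
case/eigenvalueP: hmax => x hx xn0.
pose N := \sum_a x 0 a * x 0 a.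
have Npos : 0 < N.
  rewrite lt_def sumr_ge0 ?andbT; last by move=> a _; rewrite -expr2 sqr_ge0.
  apply/eqP => /psumr_eq0P h; apply/negP: xn0; rewrite negbK.
  apply/eqP/rowP => a; rewrite mxE.
  have hh : forall b : 'I_n, true -> 0 <= x 0 b * x 0 b by move=> b _; rewrite -expr2 sqr_ge0.
  by have /eqP := h hh a isT; rewrite mulf_eq0 orbb => /eqP.
have hx' : x *m A = lmax *: x := hx.
have Qx : \sum_a \sum_b x 0 a * x 0 b * A a b = lmax * N.
  by rewrite -qform hx' -scalemxAl mxE nform.
pose g (j l : 'I_k) (a : 'I_n) : R := ((c a == j)%:R - (c a == l)%:R) * x 0 a.
have K0 : 0 <= \sum_j \sum_l \sum_a \sum_b g j l a * g j l b * (A a b - lmin * (a == b)%:R).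
  by apply: sumr_ge0 => j _; apply: sumr_ge0 => l _; apply: qpsd.
have Keq : \sum_j \sum_l \sum_a \sum_b g j l a * g j l b * (A a b - lmin * (a == b)%:R)
    = \sum_a \sum_b x 0 a * x 0 b * ((- lmin * (a == b)%:R) *+ (2 * k)
                                       - 2 * (A a b - lmin * (a == b)%:R)).
  rewrite (@swap4 _ _ _ (fun j l a b => g j l a * g j l b * (A a b - lmin * (a == b)%:R))).
  apply: eq_bigr => a _; apply: eq_bigr => b _.
  transitivity (x 0 a * x 0 b * (A a b - lmin * (a == b)%:R) *
     \sum_j \sum_l (((c a == j)%:R - (c a == l)%:R) * ((c b == j)%:R - (c b == l)%:R))).
    rewrite mulr_sumr; apply: eq_bigr => j _; rewrite mulr_sumr; apply: eq_bigr => l _.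
    by rewrite /g; ring.
  rewrite Tformula -(Bcol a b).
  move: (x 0 a) (x 0 b) (A a b - lmin * (a == b)%:R) ((c a == c b)%:R : R) (2 * k)%N.
  by move=> p q B0 d0 m0; ring.
have Rv : \sum_a \sum_b x 0 a * x 0 b * ((- lmin * (a == b)%:R) *+ (2 * k)
                                       - 2 * (A a b - lmin * (a == b)%:R))
    = (- lmin * N) *+ (2 * k) - 2 * (lmax * N - lmin * N).
  transitivity (\sum_a (\sum_b (a == b)%:R * ((x 0 a * x 0 b * - lmin) *+ (2 * k)))
      - 2 * \sum_a \sum_b x 0 a * x 0 b * (A a b - lmin * (a == b)%:R)).
    rewrite mulr_sumr -sumrB; apply: eq_bigr => a _; rewrite mulr_sumr -sumrB.
    apply: eq_bigr => b _.
    move: (x 0 a) (x 0 b) (A a b) ((a == b)%:R : R) (2 * k)%N.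
    by move=> p q B0 d0 m0; ring.
  rewrite qB Qx; congr (_ - _).
  rewrite (eq_bigr (fun a => (x 0 a * x 0 a * - lmin) *+ (2 * k))); last first.
    by move=> a _; rewrite sum_delta.
  by rewrite sumrMnl -mulr_suml mulrC.
have := K0; rewrite Keq Rv => h.
have ln0 : lmin != 0 by rewrite lt_eqF.
set t := lmax / lmin.
have lm : lmax = t * lmin by rewrite /t divfK.
rewrite -[(- lmin * N) *+ _]mulr_natr natrM in h.
have e : - lmin * N * (2%:R * k%:R) - 2 * (lmax * N - lmin * N)
    = (N * - lmin) * (2 * (k%:R - (1 - t))) by rewrite lm; ring.
rewrite e pmulr_rge0 ?mulr_gt0 ?oppr_gt0 // pmulr_rge0 // subr_ge0 in h.
exact: h.
Qed.
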